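(* For every integer $i\ge0$ and generic $q,a,b,\kappa\in\mathbb C$, $$\sum_{j=0}^{i}\varphi_{q,a,b,\kappa}(j\mid i)=1.$$
   Context: $(a;q)_k=\prod_{m=0}^{k-1}(1-q^ma)$ for $k\ge0$. For $q,a,b,\kappa\in\mathbb C$ and integers $i,j\ge0$, $$\varphi_{q,a,b,\kappa}(j\mid i)=a^j\frac{\mathbf 1_{j\le i}(q;q)_i}{(q;q)_j(q;q)_{i-j}}\frac{(b/a;q)_j(a;q)_{i-j}}{(b;q)_i}\frac{(q^ib\kappa;q)_{i-j}(q^{i-j+1}\kappa;q)_j}{(q^{i-j}a\kappa;q)_{i-j}(q^{2i-2j+1}a\kappa;q)_j}.$$ *)

(* Defs.v *)
From HB Require Import structures.
From mathcomp Require Import all_boot all_order all_algebra.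
Set Implicit Arguments. Unset Strict Implicit. Unset Printing Implicit Defensive.
Import Order.TTheory GRing.Theory Num.Theory.
Local Open Scope ring_scope.

Definition qpoch (F : ringType) (a q : F) (k : nat) : F :=
  \prod_(m < k) (1 - q ^+ m * a).

Definition phi (F : fieldType) (q a b kappa : F) (j i : nat) : F :=
  a ^+ j *
  (if (j <= i)%N then
     (qpoch q q i / (qpoch q q j * qpoch q q (i - j)))
     * (qpoch (b / a) q j * qpoch a q (i - j) / qpoch b q i)
     * (qpoch (q ^+ i * b * kappa) q (i - j) * qpoch (q ^+ (i - j).+1 * kappa) q j
        / (qpoch (q ^+ (i - j) * a * kappa) q (i - j)
           * qpoch (q ^+ (2 * i - 2 * j).+1 * a * kappa) q j))
   else 0).

(* Main.v *)
Require Import Defs.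
From HB Require Import structures.
From mathcomp Require Import all_boot all_order all_algebra.
From mathcomp Require Import ring lra zify.
Set Implicit Arguments. Unset Strict Implicit. Unset Printing Implicit Defensive.
Import Order.TTheory GRing.Theory Num.Theory.
Local Open Scope ring_scope.

Definition pr (F : fieldType) (q x : F) (lo hi : nat) : F :=
  \prod_(lo <= r < hi) (1 - q ^+ r * x).

Lemma pr_cat (F : fieldType) (q x : F) lo mid hi :
  (lo <= mid <= hi)%N -> pr q x lo hi = pr q x lo mid * pr q x mid hi.
Proof. by move=> /andP[h1 h2]; rewrite /pr (big_cat_nat h1 h2). Qed.

Lemma pr_nil (F : fieldType) (q x : F) lo hi : (hi <= lo)%N -> pr q x lo hi = 1.
Proof. by move=> h; rewrite /pr big_geq. Qed.

Lemma pr1 (F : fieldType) (q x : F) lo : pr q x lo lo.+1 = 1 - q ^+ lo * x.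
Proof. by rewrite /pr big_nat1. Qed.

Lemma qps (F : fieldType) (q x : F) s t : qpoch (q ^+ s * x) q t = pr q x s (s + t).
Proof.
elim: t => [|t IH]; first by rewrite /qpoch big_ord0 addn0 pr_nil.
rewrite /qpoch big_ord_recr /= -/(qpoch _ _ _) IH addnS /pr big_nat_recr ?leq_addr //=.
by rewrite mulrA -exprD addnC.
Qed.

Lemma qp0 (F : fieldType) (q x : F) t : qpoch x q t = pr q x 0 t.
Proof. by rewrite -(qps q x 0 t) expr0 mul1r. Qed.

Lemma qpq (F : fieldType) (q : F) t : qpoch q q t = pr q 1 1 t.+1.
Proof. by rewrite -(qps q 1 1 t) expr1 mulr1. Qed.

Lemma qps3 (F : fieldType) (q x y : F) s t :
  qpoch (q ^+ s * x * y) q t = pr q (x * y) s (s + t).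
Proof. by rewrite -mulrA qps. Qed.

Lemma prnn (F : fieldType) (q x : F) lo : pr q x lo lo = 1.
Proof. by rewrite pr_nil. Qed.

Opaque pr.

Definition Fpr (F : fieldType) (q a b K : F) (j N : nat) : F :=
  a ^+ j * (pr q 1 1 (j + N).+1 / (pr q 1 1 j.+1 * pr q 1 1 N.+1))
  * (pr q (b / a) 0 j * pr q a 0 N / pr q b 0 (j + N))
  * (pr q (b * K) (j + N) (j + N + N) * pr q K N.+1 (N.+1 + j)
     / (pr q (a * K) N (N + N) * pr q (a * K) (N + N).+1 ((N + N).+1 + j))).

Lemma phi_Fpr (F : fieldType) (q a b K : F) j N :
  phi q a b K j (j + N) = Fpr q a b K j N.
Proof.
rewrite /phi leq_addr addKn.
have -> : (2 * (j + N) - 2 * j = N + N)%N by lia.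
rewrite !qps3 qps !qpq !qp0.
by rewrite /Fpr !mulrA.
Qed.

Lemma pr_R1 (F : fieldType) (q x : F) lo hi :
  (lo <= hi)%N -> pr q x lo hi.+1 = pr q x lo hi * (1 - q ^+ hi * x).
Proof. by move=> h; rewrite (@pr_cat _ q x lo hi) ?pr1 // h /=. Qed.

Lemma pr_R2 (F : fieldType) (q x : F) lo hi :
  (lo <= hi)%N -> pr q x lo hi.+2 = pr q x lo hi * (1 - q ^+ hi * x) * (1 - q ^+ hi.+1 * x).
Proof. by move=> h; rewrite pr_R1 ?pr_R1 //; apply: leqW. Qed.

Lemma pr_L1 (F : fieldType) (q x : F) lo hi :
  (lo < hi)%N -> pr q x lo hi = (1 - q ^+ lo * x) * pr q x lo.+1 hi.
Proof. by move=> h; rewrite (@pr_cat _ q x lo lo.+1) ?pr1 // h leqnSn. Qed.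

Lemma pr_sh2 (F : fieldType) (q x : F) lo hi : (lo <= hi)%N ->
  pr q x lo.+2 hi.+2 * ((1 - q ^+ lo * x) * (1 - q ^+ lo.+1 * x))
  = pr q x lo hi * (1 - q ^+ hi * x) * (1 - q ^+ hi.+1 * x).
Proof.
move=> h; rewrite -pr_R2 // (@pr_L1 _ q x lo); last by lia.
rewrite (@pr_L1 _ q x lo.+1); last by lia.
by rewrite mulrC !mulrA.
Qed.



Definition Gw (F : fieldType) (q a b K : F) (j N : nat) : F :=
  let i := (j + N)%N in
  a ^+ j * (pr q 1 1 i.+2 / (pr q 1 1 j.+1 * pr q 1 1 N.+2))
  * (pr q (b / a) 0 j * pr q a 0 N.+1 / pr q b 0 i.+1)
  * (pr q (b * K) i.+1 (i.+1 + N) * pr q K N.+2 (N.+1 + j)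
     / (pr q (a * K) N.+1 (N.+1 + N.+1) * pr q (a * K) (N + N).+3 ((N + N).+3 + j)))
  * (- q ^+ N.+1 * (1 - q ^+ j) / (1 - q ^+ i.+1))
  * (1 - (q ^+ i.+1 + q ^+ N.+1 - 1) * K - q ^+ i * (b * K) - q ^+ N.+1 * (a * K)
     + q ^+ (i + i + N).+2 * (b * K ^+ 2) + q ^+ (i + N + N).+3 * (a * K ^+ 2)
     + (q ^+ (i + N + N).+2 + q ^+ (i + i + N).+2 - q ^+ (i + i + N + N).+3) * (a * b * K ^+ 2)
     - q ^+ (i + i + N + N).+3 * (a * b * K ^+ 3))
  / (1 - q ^+ (N + N).+2 * (a * K)).

Lemma caseA1 (F : fieldType) (q a b K : F) s n :
  a != 0 ->
  pr q 1 1 (s + n).+3 != 0 -> pr q 1 1 s.+2 != 0 -> pr q 1 1 n.+2 != 0 ->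
  pr q b 0 (s + n).+2 != 0 ->
  pr q (a * K) n.+2 (n + n).+2 != 0 -> pr q (a * K) (n + n).+3 (n + n + s).+4 != 0 ->
  1 - q ^+ (s + n).+3 * 1 != 0 -> 1 - q ^+ s.+2 * 1 != 0 -> 1 - q ^+ n.+2 * 1 != 0 ->
  1 - q ^+ (s + n).+2 * b != 0 ->
  1 - q ^+ n.+1 * (a * K) != 0 -> 1 - q ^+ (n + n).+2 * (a * K) != 0 ->
  1 - q ^+ (n + n).+3 * (a * K) != 0 -> 1 - q ^+ (n + n).+4 * (a * K) != 0 ->
  1 - q ^+ (n + n + s).+4 * (a * K) != 0 -> 1 - q ^+ (n + n + s).+4.+1 * (a * K) != 0 ->
  Fpr q a b K s.+1 n.+2 - Fpr q a b K s.+1 n.+1 = Gw q a b K s.+2 n - Gw q a b K s.+1 n.+1.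
Proof.
rewrite /Fpr /Gw /= !addSn !addnS.
have -> : pr q 1 1 (s + n).+4 = pr q 1 1 (s + n).+3 * (1 - q ^+ (s + n).+3 * 1) by rewrite pr_R1.
have -> : pr q 1 1 s.+3 = pr q 1 1 s.+2 * (1 - q ^+ s.+2 * 1) by rewrite pr_R1.
have -> : pr q 1 1 n.+3 = pr q 1 1 n.+2 * (1 - q ^+ n.+2 * 1) by rewrite pr_R1.
have -> : pr q (b / a) 0 s.+2 = pr q (b / a) 0 s.+1 * (1 - q ^+ s.+1 * (b / a)) by rewrite pr_R1.
have -> : pr q a 0 n.+2 = pr q a 0 n.+1 * (1 - q ^+ n.+1 * a) by rewrite pr_R1.
have -> : pr q b 0 (s + n).+3 = pr q b 0 (s + n).+2 * (1 - q ^+ (s + n).+2 * b) by rewrite pr_R1.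
have -> : pr q (b * K) (s + n).+3 ((s + n).+2 + n).+3
   = pr q (b * K) (s + n).+3 (s + n + n).+3 * (1 - q ^+ ((s + n).+2 + n).+1 * (b * K))
     * (1 - q ^+ ((s + n).+2 + n).+2 * (b * K)).
  by rewrite pr_R2; last lia.
have -> : pr q (b * K) (s + n).+2 ((s + n).+1 + n).+2
   = (1 - q ^+ (s + n).+2 * (b * K)) * pr q (b * K) (s + n).+3 (s + n + n).+3.
  by rewrite pr_L1; last lia.
have -> : pr q (b * K) (s + n).+3 ((s + n).+1 + n).+3
   = pr q (b * K) (s + n).+3 (s + n + n).+3 * (1 - q ^+ ((s + n).+1 + n).+2 * (b * K)).
  by rewrite pr_R1; last lia.
have -> : pr q K n.+3 (n + s).+4 = pr q K n.+3 (n + s).+3 * (1 - q ^+ (n + s).+3 * K).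
  by rewrite pr_R1; last lia.
have -> : pr q K n.+2 (n + s).+3 = (1 - q ^+ n.+2 * K) * pr q K n.+3 (n + s).+3.
  by rewrite pr_L1; last lia.
have -> : pr q (a * K) n.+1 (n + n).+2 = (1 - q ^+ n.+1 * (a * K)) * pr q (a * K) n.+2 (n + n).+2.
  by rewrite pr_L1; last lia.
have -> : pr q (a * K) n.+2 (n + n).+4
   = pr q (a * K) n.+2 (n + n).+2 * (1 - q ^+ (n + n).+2 * (a * K)) * (1 - q ^+ (n + n).+3 * (a * K)).
  by rewrite pr_R2; last lia.
have -> : pr q (a * K) (n + n).+3 (n + n + s).+1.+4
   = pr q (a * K) (n + n).+3 (n + n + s).+4 * (1 - q ^+ (n + n + s).+4 * (a * K)).
  by rewrite pr_R1; last lia.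
have -> : pr q (a * K) (n + n).+3 ((n + n).+1 + s).+3 = pr q (a * K) (n + n).+3 (n + n + s).+4 by [].
have -> : pr q (a * K) (n + n).+1.+4 ((n + n).+1 + s).+1.+4 = pr q (a * K) (n + n).+1.+4 ((n + n).+2 + s).+4 by [].
move=> a0 nA nB nC nBb nU nW n1 n2 n3 n4 n5 n6 n7 n8 n9 n10.
have -> : pr q (a * K) (n + n).+1.+4 ((n + n).+2 + s).+4
   = pr q (a * K) (n + n).+3 (n + n + s).+4 * (1 - q ^+ (n + n + s).+4 * (a * K))
     * (1 - q ^+ (n + n + s).+4.+1 * (a * K))
     / ((1 - q ^+ (n + n).+3 * (a * K)) * (1 - q ^+ (n + n).+4 * (a * K))).
  apply: (canRL (mulfK _)); first by rewrite mulf_neq0.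
  by rewrite pr_sh2; last by clear -s n; lia.
rewrite !exprS !exprD in n1 n2 n3 n4 n5 n6 n7 n8 n9 n10 *.
rewrite !mulr1 in n1 n2 n3.
field.
by rewrite ?a0 ?nA ?nB ?nC ?nBb ?nU ?nW ?n1 ?n2 ?n3 ?n4 ?n5 ?n6 ?n7 ?n8 ?n9 ?n10.
Qed.


Lemma caseA0 (F : fieldType) (q a b K : F) n :
  a != 0 -> pr q 1 1 n.+2 != 0 -> 1 - q ^+ n.+2 * 1 != 0 -> 1 - q ^+ 1 * 1 != 0 ->
  pr q b 0 n.+1 != 0 -> 1 - q ^+ n.+1 * b != 0 ->
  pr q (a * K) n.+2 (n + n).+2 != 0 -> 1 - q ^+ n.+1 * (a * K) != 0 ->
  1 - q ^+ (n + n).+2 * (a * K) != 0 -> 1 - q ^+ (n + n).+3 * (a * K) != 0 ->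
  Fpr q a b K 0 n.+2 - Fpr q a b K 0 n.+1 = Gw q a b K 1 n.
Proof.
rewrite /Fpr /Gw /= !addSn !addnS !add0n !addn0 !prnn.
have -> : pr q 1 1 n.+3 = pr q 1 1 n.+2 * (1 - q ^+ n.+2 * 1) by rewrite pr_R1.
rewrite pr1 pr1.
have -> : pr q a 0 n.+2 = pr q a 0 n.+1 * (1 - q ^+ n.+1 * a) by rewrite pr_R1.
have -> : pr q b 0 n.+2 = pr q b 0 n.+1 * (1 - q ^+ n.+1 * b) by rewrite pr_R1.
have -> : pr q (b * K) n.+2 (n + n).+4
   = pr q (b * K) n.+2 (n + n).+2 * (1 - q ^+ (n + n).+2 * (b * K)) * (1 - q ^+ (n + n).+3 * (b * K)).
  by rewrite pr_R2; last lia.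
have -> : pr q (b * K) n.+1 (n + n).+2 = (1 - q ^+ n.+1 * (b * K)) * pr q (b * K) n.+2 (n + n).+2.
  by rewrite pr_L1; last lia.
have -> : pr q (a * K) n.+2 (n + n).+4
   = pr q (a * K) n.+2 (n + n).+2 * (1 - q ^+ (n + n).+2 * (a * K)) * (1 - q ^+ (n + n).+3 * (a * K)).
  by rewrite pr_R2; last lia.
have -> : pr q (a * K) n.+1 (n + n).+2 = (1 - q ^+ n.+1 * (a * K)) * pr q (a * K) n.+2 (n + n).+2.
  by rewrite pr_L1; last lia.
rewrite pr1.
move=> a0 nC n1 n2 nBb n3 nU n4 n5 n6.
rewrite !exprS !exprD ?expr0 in n1 n2 n3 n4 n5 n6 *.
rewrite !mulr1 in n1 n2.
field.
by rewrite ?a0 ?nC ?nBb ?nU ?n1 ?n2 ?n3 ?n4 ?n5 ?n6.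
Qed.

Lemma caseB1 (F : fieldType) (q a b K : F) s :
  a != 0 -> pr q 1 1 s.+2 != 0 -> 1 - q ^+ s.+2 * 1 != 0 -> 1 - q ^+ 1 * 1 != 0 ->
  pr q b 0 s.+1 != 0 -> 1 - q ^+ s.+1 * b != 0 ->
  pr q (a * K) 1 s.+2 != 0 -> 1 - q ^+ 1 * (a * K) != 0 -> 1 - q ^+ 2 * (a * K) != 0 ->
  1 - q ^+ s.+2 * (a * K) != 0 -> 1 - q ^+ s.+3 * (a * K) != 0 ->
  Fpr q a b K s.+1 1 - Fpr q a b K s.+1 0 = - Fpr q a b K s.+2 0 - Gw q a b K s.+1 0.
Proof.
rewrite /Fpr /Gw /= !addSn !addnS !add0n !addn0 !prnn.
have -> : pr q 1 1 s.+3 = pr q 1 1 s.+2 * (1 - q ^+ s.+2 * 1) by rewrite pr_R1.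
have -> : pr q (b / a) 0 s.+2 = pr q (b / a) 0 s.+1 * (1 - q ^+ s.+1 * (b / a)) by rewrite pr_R1.
have -> : pr q b 0 s.+2 = pr q b 0 s.+1 * (1 - q ^+ s.+1 * b) by rewrite pr_R1.
have -> : pr q K 2 s.+3 = pr q K 2 s.+2 * (1 - q ^+ s.+2 * K) by rewrite pr_R1.
have -> : pr q K 1 s.+2 = (1 - q ^+ 1 * K) * pr q K 2 s.+2 by rewrite pr_L1.
have -> : pr q K 1 s.+3 = (1 - q ^+ 1 * K) * (pr q K 2 s.+2 * (1 - q ^+ s.+2 * K)).
  by rewrite pr_L1 // pr_R1.
have -> : pr q (a * K) 1 s.+3 = pr q (a * K) 1 s.+2 * (1 - q ^+ s.+2 * (a * K)) by rewrite pr_R1.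
rewrite !pr1.
move=> a0 nB n1 n2 nBb n3 nV n4 n5 n6 n7.
have -> : pr q (a * K) 3 s.+4
   = pr q (a * K) 1 s.+2 * (1 - q ^+ s.+2 * (a * K)) * (1 - q ^+ s.+3 * (a * K))
     / ((1 - q ^+ 1 * (a * K)) * (1 - q ^+ 2 * (a * K))).
  apply: (canRL (mulfK _)); first by rewrite mulf_neq0.
  by rewrite pr_sh2.
rewrite !exprS !exprD ?expr0 in n1 n2 n3 n4 n5 n6 n7 *.
rewrite ?mulr1 in n1 n2 n4 n5.
field.
by rewrite ?a0 ?nB ?nBb ?nV ?n1 ?n2 ?n3 ?n4 ?n5 ?n6 ?n7.
Qed.

Lemma caseB0 (F : fieldType) (q a b K : F) :
  a != 0 -> 1 - q ^+ 0 * b != 0 -> 1 - q ^+ 1 * 1 != 0 -> 1 - q ^+ 1 * (a * K) != 0 ->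
  Fpr q a b K 0 1 - Fpr q a b K 0 0 = - Fpr q a b K 1 0.
Proof.
rewrite /Fpr /= !addn0 !add0n !addn1 !prnn !pr1.
move=> a0 n1 n2 n3.
rewrite ?expr0 ?expr1 ?mul1r ?mulr1 in n1 n2 n3 *.
field.
by rewrite ?a0 ?n1 ?n2 ?n3 ?oner_neq0.
Qed.



Definition NZ (F : fieldType) (q x : F) (lo hi : nat) : Prop :=
  forall r, (lo <= r)%N -> (r < hi)%N -> 1 - q ^+ r * x != 0.

Lemma prNZ (F : fieldType) (q x : F) lo hi lo' hi' :
  NZ q x lo hi -> (lo <= lo')%N -> (hi' <= hi)%N -> pr q x lo' hi' != 0.
Proof.
move=> H h1 h2; elim: hi' h2 => [|h IH] h2; first by rewrite pr_nil ?oner_neq0.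
case: (leqP lo' h) => hl; last by rewrite pr_nil ?oner_neq0.
rewrite pr_R1 // mulf_neq0 ?IH ?H //; [exact: ltnW | exact: leq_trans hl].
Qed.

Lemma pr_NZ (F : fieldType) (q x : F) lo hi : pr q x lo hi != 0 -> NZ q x lo hi.
Proof.
move=> H r h1 h2; apply: contraNneq H => e.
rewrite (@pr_cat _ q x lo r hi); last by rewrite h1 ltnW.
rewrite (@pr_cat _ q x r r.+1 hi); last by rewrite leqnSn h2.
by rewrite pr1 e mul0r mulr0.
Qed.

Lemma NZw (F : fieldType) (q x : F) lo hi lo' hi' :
  NZ q x lo hi -> (lo <= lo')%N -> (hi' <= hi)%N -> NZ q x lo' hi'.
Proof.
move=> H h1 h2 r r1 r2; apply: H; [exact: leq_trans r1 | exact: leq_trans h2].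
Qed.

Definition Gt (F : fieldType) (q a b K : F) (i j : nat) : F :=
  if j == 0%N then 0 else if j == i.+1 then - phi q a b K i.+1 i.+1
  else Gw q a b K j (i - j).

Lemma step (F : fieldType) (q a b K : F) i j :
  a != 0 -> NZ q 1 1 i.+2 -> NZ q b 0 i.+1 -> NZ q (a * K) 1 (i.+1 + i.+1) ->
  (j <= i)%N -> phi q a b K j i.+1 - phi q a b K j i = Gt q a b K i j.+1 - Gt q a b K i j.
Proof.
move=> a0 H1 H2 H3 ji.
rewrite /Gt /=.
case: (ltngtP j i) ji => // [lt_ji|eji] _.
- rewrite eqSS (ltn_eqF lt_ji) (ltn_eqF (ltn_trans lt_ji (ltnSn i))).
  case: j lt_ji => [|s] lt_ji.
  + case: i lt_ji H1 H2 H3 => // n _ H1 H2 H3.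
    rewrite eqxx subr0 subSS subn0.
    have -> : phi q a b K 0 n.+2 = Fpr q a b K 0 n.+2 by rewrite -phi_Fpr add0n.
    have -> : phi q a b K 0 n.+1 = Fpr q a b K 0 n.+1 by rewrite -phi_Fpr add0n.
    apply: caseA0 => //.
    * by apply: (prNZ H1).
    * by apply: H1.
    * by apply: H1.
    * by apply: (prNZ H2).
    * by apply: H2.
    * by apply: (prNZ H3); lia.
    * by apply: H3; lia.
    * by apply: H3; lia.
    * by apply: H3; lia.
  + have [n ei] : exists n, i = (s.+1 + n.+1)%N by exists (i - s.+2)%N; lia.
    subst i.
    have -> : (s.+1 + n.+1 - s.+2 = n)%N by lia.
    have -> : (s.+1 + n.+1 - s.+1 = n.+1)%N by lia.
    have -> : phi q a b K s.+1 (s.+1 + n.+1).+1 = Fpr q a b K s.+1 n.+2 by rewrite -phi_Fpr -addnS.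
    rewrite phi_Fpr.
    apply: caseA1 => //.
    * by apply: (prNZ H1); lia.
    * by apply: (prNZ H1); lia.
    * by apply: (prNZ H1); lia.
    * by apply: (prNZ H2); lia.
    * by apply: (prNZ H3); lia.
    * by apply: (prNZ H3); lia.
    * by apply: H1; lia.
    * by apply: H1; lia.
    * by apply: H1; lia.
    * by apply: H2; lia.
    * by apply: H3; lia.
    * by apply: H3; lia.
    * by apply: H3; lia.
    * by apply: H3; lia.
    * by apply: H3; lia.
    * by apply: H3; lia.
- subst i; rewrite eqxx (ltn_eqF (ltnSn j)) subnn.
  case: j H1 H2 H3 => [|s] H1 H2 H3.
  + rewrite eqxx subr0.
    have -> : phi q a b K 0 1 = Fpr q a b K 0 1 by rewrite -phi_Fpr add0n.
    have -> : phi q a b K 0 0 = Fpr q a b K 0 0 by rewrite -phi_Fpr add0n.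
    have -> : phi q a b K 1 1 = Fpr q a b K 1 0 by rewrite -phi_Fpr addn0.
    apply: caseB0 => //.
    * by apply: H2.
    * by apply: H1.
    * by apply: H3.
  + have -> : phi q a b K s.+1 s.+2 = Fpr q a b K s.+1 1 by rewrite -phi_Fpr addn1.
    have -> : phi q a b K s.+1 s.+1 = Fpr q a b K s.+1 0 by rewrite -phi_Fpr addn0.
    have -> : phi q a b K s.+2 s.+2 = Fpr q a b K s.+2 0 by rewrite -phi_Fpr addn0.
    apply: caseB1 => //.
    * by apply: (prNZ H1); lia.
    * by apply: H1; lia.
    * by apply: H1; lia.
    * by apply: (prNZ H2); lia.
    * by apply: H2; lia.
    * by apply: (prNZ H3); lia.
    * by apply: H3; lia.
    * by apply: H3; lia.
    * by apply: H3; lia.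
    * by apply: H3; lia.
Qed.

Lemma sumNZ (F : fieldType) (q a b K : F) I :
  a != 0 -> NZ q 1 1 I.+1 -> NZ q b 0 I -> NZ q (a * K) 1 (I + I) ->
  \sum_(0 <= j < I.+1) phi q a b K j I = 1.
Proof.
move=> a0; elim: I => [|I IH] H1 H2 H3.
  rewrite big_nat1.
  have -> : phi q a b K 0 0 = Fpr q a b K 0 0 by rewrite -phi_Fpr.
  by rewrite /Fpr !addn0 !prnn expr0 !(mul1r, mulr1, invr1, divr1).
have IH' := IH (NZw H1 (leqnn _) (leqnSn _)) (NZw H2 (leqnn _) (leqnSn _))
  (NZw H3 (leqnn _) (leq_add (leqnSn _) (leqnSn _))).
rewrite big_nat_recr //=.
have E : \sum_(0 <= j < I.+1) (phi q a b K j I.+1 - phi q a b K j I)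
   = Gt q a b K I I.+1 - Gt q a b K I 0.
  apply: telescope_sumr_eq => // k /andP[_ hk].
  by apply: step => //; rewrite -addnS.
have -> : \sum_(0 <= j < I.+1) phi q a b K j I.+1
   = \sum_(0 <= j < I.+1) phi q a b K j I + (Gt q a b K I I.+1 - Gt q a b K I 0).
  by rewrite -E -big_split /=; apply: eq_bigr => j _; rewrite addrC subrK.
rewrite IH' /Gt eqxx /=.
by rewrite subr0 addrNK.
Qed.

Theorem mainTheorem6 (C : numClosedFieldType) (i : nat) (q a b kappa : C) :
  a != 0 ->
  qpoch b q i != 0 ->
  (forall j : nat, (j <= i)%N ->
     [/\ qpoch q q j != 0,
         qpoch (q ^+ (i - j) * a * kappa) q (i - j) != 0
       & qpoch (q ^+ (2 * i - 2 * j).+1 * a * kappa) q j != 0]) ->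
  \sum_(0 <= j < i.+1) phi q a b kappa j i = 1.
Proof.
move=> a0 hb hj.
apply: sumNZ => //.
- by case: (hj i (leqnn i)) => + _ _; rewrite qpq; apply: pr_NZ.
- by move: hb; rewrite qp0; apply: pr_NZ.
- move=> r r1 r2.
  case: (leqP r i) => hri.
    case: (hj i (leqnn i)) => _ _; rewrite qps3 subnn => /pr_NZ H.
    by apply: H; lia.
  case: (hj 0%N (leq0n i)) => _ + _; rewrite qps3 subn0 => /pr_NZ H.
  by apply: H; lia.
Qed.
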